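(* Fix a general instance satisfying the unique-default-action assumption, with default action $a_0$ and margin $\delta_{\mu_0}>0$. 1. The set $S$ is an upper interval of $[0,1]$: if $\beta\in S$ and $\beta\le\beta'\le1$, then $\beta'\in S$. 2. Every $\beta\in S$ satisfies $\beta\ge\delta_{\mu_0}/\sqrt2$. Hence $\alpha_{\min}:=\inf S\ge\delta_{\mu_0}/\sqrt2$ whenever $S\neq\emptyset$. 3. For $\beta\in(0,1]$, if the threshold-test LP at $\beta$ has a feasible solution with strictly positive objective, then its optimal value is at least $\delta_{\mu_0}/\sqrt2$.
   Context: Finite $\Omega$ and $A$, full-support prior $\mu_0\in\Delta(\Omega)$, receiver utility $u_R$, and $\Delta u_{a,a'}(\omega)=u_R(a,\omega)-u_R(a',\omega)$. Unique-default-action assumption: $\arg\max_a\sum_\omega\mu_0(\omega)u_R(a,\omega)=\{a_0\}$. Margin. Let $R_{a_0}^1=\{\nu\in\Delta(\Omega):\Delta u_{a_0,a'}^\top\nu\ge0\ \forall a'\ne a_0\}$. Define $\delta_{\mu_0}=\min\{\mathrm{dist}(\mu_0,\partial R^1_{a_0}),\mathrm{dist}(\mu_0,\partial\Delta(\Omega))\}$, with Euclidean distances and boundaries relative to the affine hull of the simplex. This is positive under the assumptions. The set $S$ consists of all $\beta\in[0,1]$ for which there exist $a\ne a_0$ and $\nu\in\Delta(\Omega)$ with $\Delta u_{a,a_0}^\top\big((1-\beta)\mu_0+\beta\nu\big)=0$. Threshold-test LP at $\beta$: variables $\pi(a\mid\omega)\ge0$ with $\sum_a\pi(a\mid\omega)=1$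 for all $\omega$. Objective: maximize $\sum_{a\ne a_0}\sum_\omega\pi(a\mid\omega)\mu_0(\omega)$. Constraints: - For all $a$ and all $a'\neq a$: $\sum_\omega\pi(a\mid\omega)\mu_0(\omega)\big[\beta\Delta u_{a,a'}(\omega)+(1-\beta)\sum_{\omega'}\mu_0(\omega')\Delta u_{a,a'}(\omega')\big]\ge0$. - For all $a\ne a_0$: the same expression with $a'=a_0$ equals $0$. *)

(* Defs.v *)
From HB Require Import structures.
From mathcomp Require Import all_boot all_order all_algebra.
From mathcomp Require Import boolp classical_sets reals constructive_ereal ereal.
Set Implicit Arguments. Unset Strict Implicit. Unset Printing Implicit Defensive.
Import Order.TTheory GRing.Theory Num.Theory.
Local Open Scope classical_set_scope.
Local Open Scope ring_scope.

Section Defs.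
Variables (R : realType) (Omega A : finType).

Definition enorm (x : Omega -> R) : R := Num.sqrt (\sum_w x w ^+ 2).

Definition simplex : set (Omega -> R) :=
  [set nu | (forall w, 0 <= nu w) /\ \sum_w nu w = 1].

Definition affhull : set (Omega -> R) := [set nu | \sum_w nu w = 1].

Definition relbd (C : set (Omega -> R)) : set (Omega -> R) :=
  [set nu | affhull nu /\
     (forall e : R, 0 < e -> exists y, [/\ affhull y, enorm (fun w => y w - nu w) < e & C y]) /\
     (forall e : R, 0 < e -> exists y, [/\ affhull y, enorm (fun w => y w - nu w) < e & ~ C y])].

(* Euclidean distance from a point to a set (+oo for the empty set) *)
Definition dist (x : Omega -> R) (B : set (Omega -> R)) : \bar R :=
  ereal_inf [set (enorm (fun w => x w - y w))%:E | y in B].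

Variables (uR : A -> Omega -> R).

Definition Du (a a' : A) (w : Omega) : R := uR a w - uR a' w.

Definition Rone (a0 : A) : set (Omega -> R) :=
  [set nu | simplex nu /\ forall a', a' != a0 -> 0 <= \sum_w Du a0 a' w * nu w].

Definition margin (mu0 : Omega -> R) (a0 : A) : \bar R :=
  Order.min (dist mu0 (relbd (Rone a0))) (dist mu0 (relbd simplex)).

Definition Sset (mu0 : Omega -> R) (a0 : A) : set R :=
  [set beta | 0 <= beta <= 1 /\
     exists a, a != a0 /\ exists nu, simplex nu /\
       \sum_w Du a a0 w * ((1 - beta) * mu0 w + beta * nu w) = 0].

Definition lp_expr (mu0 : Omega -> R) (beta : R) (pi : A -> Omega -> R) (a a' : A) : R :=
  \sum_w pi a w * mu0 w *
    (beta * Du a a' w + (1 - beta) * \sum_w' mu0 w' * Du a a' w').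

Definition lp_feasible (mu0 : Omega -> R) (a0 : A) (beta : R) (pi : A -> Omega -> R) : Prop :=
  [/\ (forall a w, 0 <= pi a w),
      (forall w, \sum_a pi a w = 1),
      (forall a a', a' != a -> 0 <= lp_expr mu0 beta pi a a') &
      (forall a, a != a0 -> lp_expr mu0 beta pi a a0 = 0)].

Definition lp_obj (mu0 : Omega -> R) (a0 : A) (pi : A -> Omega -> R) : R :=
  \sum_(a | a != a0) \sum_w pi a w * mu0 w.

Definition lp_value (mu0 : Omega -> R) (a0 : A) (beta : R) : R :=
  sup [set lp_obj mu0 a0 pi | pi in lp_feasible mu0 a0 beta].

End Defs.

(* Main.v *)
Require Import Defs.
From HB Require Import structures.
From mathcomp Require Import all_boot all_order all_algebra.
From mathcomp Require Import boolp classical_sets reals constructive_ereal ereal.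
From mathcomp Require Import ring lra.
Import Order.TTheory GRing.Theory Num.Theory.
Local Open Scope classical_set_scope.
Local Open Scope ring_scope.
Section Gen.
Variables (R : realType) (Omega : finType).

Lemma enorm_ge0 (x : Omega -> R) : 0 <= enorm x.
Proof. exact: sqrtr_ge0. Qed.

Lemma enormZ (k : R) (x : Omega -> R) :
  enorm (fun w => k * x w) = `|k| * enorm x.
Proof.
rewrite /enorm.
have -> : \sum_w (k * x w) ^+ 2 = k ^+ 2 * \sum_w x w ^+ 2.
  by rewrite mulr_sumr; apply: eq_bigr => w _; rewrite exprMn.
by rewrite sqrtrM ?sqr_ge0 // sqrtr_sqr.
Qed.

Lemma enorm0 : enorm (fun _ : Omega => 0 : R) = 0.
Proof.
rewrite /enorm big1 ?sqrtr0 // => w _; by rewrite expr0n.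
Qed.

Lemma simplex_le1 (x : Omega -> R) w : simplex x -> x w <= 1.
Proof.
move=> [h0 h1]; rewrite -h1 (bigD1 w) //= lerDl.
by apply: sumr_ge0 => i _; apply: h0.
Qed.

Lemma simplex_dist (x y : Omega -> R) : simplex x -> simplex y ->
  \sum_w (x w - y w) ^+ 2 <= 2 - 2 * \sum_w x w * y w.
Proof.
move=> hx hy.
have -> : 2 - 2 * \sum_w x w * y w = \sum_w (x w + y w - 2 * (x w * y w)).
  rewrite sumrB big_split /= hx.2 hy.2 -mulr_sumr; lra.
apply: ler_sum => w _.
have := hx.1 w; have := hy.1 w; have := simplex_le1 _ w hx; have := simplex_le1 _ w hy.
move=> a b c d. nra.
Qed.

Lemma simplex_enorm (x y : Omega -> R) : simplex x -> simplex y ->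
  enorm (fun w => x w - y w) <= Num.sqrt 2.
Proof.
move=> hx hy; rewrite /enorm; apply: ler_wsqrtr; rewrite /=.

apply: (le_trans (simplex_dist _ _ hx hy)).

rewrite lerBlDr lerDl; apply: mulr_ge0 => //; apply: sumr_ge0 => w _.
by apply: mulr_ge0; [apply: hx.1|apply: hy.1].
Qed.

Lemma simplex_enorm_lt (x y : Omega -> R) : simplex x -> simplex y ->
  (forall w, 0 < y w) ->
  enorm (fun w => x w - y w) < Num.sqrt 2.
Proof.
move=> hx hy hpos; rewrite /enorm ltr_sqrt //.
apply: (le_lt_trans (simplex_dist _ _ hx hy)).
have hs : 0 < \sum_w x w * y w.
  rewrite lt_def; apply/andP; split; last first.
    by apply: sumr_ge0 => w _; apply: mulr_ge0; [apply: hx.1|apply: hy.1].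
  apply/negP => /eqP H.
  have H0 := psumr_eq0P (fun w _ => mulr_ge0 (hx.1 w) (hy.1 w)) H.
  have : \sum_w x w = 0.
    apply: big1 => w _; have /eqP := H0 w isT.
    by rewrite mulf_eq0 (gt_eqF (hpos w)) orbF => /eqP.
  by rewrite hx.2 => /eqP; rewrite oner_eq0.
lra.
Qed.

End Gen.

Section Main.
Variables (R : realType) (Omega A : finType)
  (mu0 : Omega -> R) (uR : A -> Omega -> R) (a0 : A).
Hypotheses (hmu_pos : forall w, 0 < mu0 w) (hmu_sum : \sum_w mu0 w = 1)
  (hdefault : forall a, a != a0 ->
     \sum_w mu0 w * uR a w < \sum_w mu0 w * uR a0 w).

Definition g (i : (Omega + A)%type) (x : Omega -> R) : R :=
  match i with
  | inl w => x w
  | inr a' => if a' == a0 then \sum_w x w else \sum_w Du uR a0 a' w * x w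
  end.

Lemma g_lin i (x d : Omega -> R) s :
  g i (fun w => x w + s * d w) = g i x + s * g i d.
Proof.
case: i => [w|a'] //=; case: ifP => _.
  by rewrite big_split /= mulr_sumr.
by rewrite mulr_sumr -big_split /=; apply: eq_bigr => w _; ring.
Qed.

Lemma Rone_g x : Rone uR a0 x <-> (\sum_w x w = 1 /\ forall i, 0 <= g i x).
Proof.
split.
  move=> [[h0 h1] h2]; split => // -[w|a'] /=; first exact: h0.
  by case: ifP => [_|/negbT]; [rewrite h1|apply: h2].
move=> [h1 h2]; split; first by split => // w; apply: (h2 (inl w)).
move=> a' ha; have := h2 (inr a'); rewrite /= (negbTE ha); done.
Qed.

Lemma Dmu a : a != a0 -> \sum_w Du uR a a0 w * mu0 w < 0.
Proof.
move=> ha; have := hdefault a ha.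
have -> : \sum_w Du uR a a0 w * mu0 w =
   \sum_w mu0 w * uR a w - \sum_w mu0 w * uR a0 w.
  by rewrite -sumrB; apply: eq_bigr => w _; rewrite /Du; ring.
lra.
Qed.

Lemma g_mu0 i : 0 < g i mu0.
Proof.
case: i => [w|a'] /=; first exact: hmu_pos.
case: ifP => [_|/negbT ha]; first by rewrite hmu_sum.
have := Dmu a' ha.
have -> : \sum_w Du uR a' a0 w * mu0 w = - \sum_w Du uR a0 a' w * mu0 w.
  by rewrite -sumrN; apply: eq_bigr => w _; rewrite /Du; ring.
lra.
Qed.

Lemma exit (d : Omega -> R) (hd : \sum_w d w = 0) i0 :
  g i0 d < 0 ->
  exists s, [/\ 0 < s, s <= g i0 mu0 / - g i0 d,
    Rone uR a0 (fun w => mu0 w + s * d w) &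
    relbd (Rone uR a0) (fun w => mu0 w + s * d w)].
Proof.
move=> hi0.
pose P := fun i => g i d < 0.
pose F := fun i => g i mu0 / - g i d.
have [i Pi Hmin] := @arg_minP _ R _ i0 P F hi0.
have hPi : g i d < 0 by exact: Pi.
have hs : 0 < F i by rewrite /F divr_gt0 ?g_mu0 // oppr_gt0.
have hsum : forall t, \sum_w (mu0 w + t * d w) = 1.
  by move=> t; rewrite big_split /= -mulr_sumr hd hmu_sum mulr0 addr0.
have hR : Rone uR a0 (fun w => mu0 w + F i * d w).
  apply/Rone_g; split => // j; rewrite g_lin.
  case: (leP 0 (g j d)) => hj.
    by apply: addr_ge0; [apply: ltW; apply: g_mu0|apply: mulr_ge0 => //; apply: ltW].
  have := Hmin j hj; rewrite /F => hle.
  have hn : 0 < - g j d by rewrite oppr_gt0.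
  rewrite ler_pdivlMr // in hle.
  lra.
exists (F i); split => //; first exact: (Hmin i0 hi0).
split.
  exact: (hsum (F i)).
split.
  move=> e he; exists (fun w => mu0 w + F i * d w); split => //.
  by rewrite (_ : (fun w => _) = fun _ => 0) ?enorm0 // funeqE => w; rewrite subrr.
move=> e he.
pose eps := e / (enorm d + 1).
have hn := enorm_ge0 _ _ d.
have heps : 0 < eps by rewrite divr_gt0 // ltr_wpDl.
exists (fun w => mu0 w + (F i + eps) * d w); split.
- exact: (hsum _).
- rewrite (_ : (fun w => _) = fun w => eps * d w); last first.
    by rewrite funeqE => w; ring.
  rewrite enormZ gtr0_norm // /eps mulrAC ltr_pdivrMr ?ltr_wpDl //.
  by rewrite ltr_pM2l //; lra.
- move/Rone_g => [_ /(_ i)]; rewrite g_lin.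
  have : g i mu0 + F i * g i d = 0.
    have hne : g i d != 0 by rewrite lt_eqF.
    by rewrite /F; field.
  have : eps * g i d < 0 by rewrite pmulr_rlt0.
  lra.
Qed.

Lemma margin_le p : relbd (Rone uR a0) p ->
  (margin uR mu0 a0 <= (enorm (fun w => mu0 w - p w))%:E)%E.
Proof.
move=> hp; rewrite /margin ge_min; apply/orP; left.
rewrite /dist; apply: ge_ereal_inf; exists (enorm (fun w => mu0 w - p w))%:E => //.
by exists p.
Qed.


Lemma S_margin (beta : R) a (nu : Omega -> R) : 0 <= beta -> a != a0 -> simplex nu ->
  \sum_w Du uR a a0 w * ((1 - beta) * mu0 w + beta * nu w) = 0 ->
  0 < beta /\
  (margin uR mu0 a0 <= (beta * enorm (fun w => nu w - mu0 w))%:E)%E.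
Proof.
move=> hb ha hnu heq.
have hbpos : 0 < beta.
  rewrite lt_def hb andbT; apply/eqP => hb0.
  move: heq; rewrite hb0.
  under eq_bigr do rewrite subr0 mul1r mul0r addr0.
  by move=> h; have := Dmu a ha; rewrite h ltxx.
split => //.
pose d := fun w => nu w - mu0 w.
have hd : \sum_w d w = 0 by rewrite /d sumrB hnu.2 hmu_sum subrr.
have h1 : g (inr a) mu0 + beta * g (inr a) d = 0.
  rewrite -g_lin /= (negbTE ha).
  have -> : \sum_w Du uR a0 a w * (mu0 w + beta * d w) =
    - \sum_w Du uR a a0 w * ((1 - beta) * mu0 w + beta * nu w).
    by rewrite -sumrN; apply: eq_bigr => w _; rewrite /Du /d; ring.
  by rewrite heq oppr0.
have hg := g_mu0 (inr a).
have hgd : g (inr a) d < 0.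
  have : beta * g (inr a) d < 0 by lra.
  by rewrite pmulr_rlt0.
have [s [hs0 hsb hRp hrel]] := exit d hd (inr a) hgd.
have hroot : g (inr a) mu0 / - g (inr a) d = beta.
  have hne : g (inr a) d != 0 by rewrite lt_eqF.
  have -> : g (inr a) mu0 = - beta * g (inr a) d by lra.
  by field.
rewrite hroot in hsb.
apply: (le_trans (margin_le _ hrel)).
rewrite lee_fin (_ : (fun w => _) = fun w => (- s) * d w); last first.
  by rewrite funeqE => w; ring.
rewrite enormZ normrN gtr0_norm //.
by apply: ler_wpM2r => //; apply: enorm_ge0.
Qed.

Lemma S_upper (beta beta' : R) : Sset uR mu0 a0 beta -> beta <= beta' <= 1 ->
  Sset uR mu0 a0 beta'.
Proof.
move=> [/andP[hb0 hb1] [a [ha [nu [hnu heq]]]]] /andP[hbb' hb'1].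
have [hbpos _] := S_margin beta a nu hb0 ha hnu heq.
have hb' : 0 < beta' by apply: (lt_le_trans hbpos).
split; first by apply/andP; split => //; apply: ltW.
exists a; split => //.
exists (fun w => ((beta' - beta) * mu0 w + beta * nu w) / beta'); split.
  split.
    move=> w; apply: divr_ge0; last exact: ltW.
    apply: addr_ge0; apply: mulr_ge0; rewrite ?subr_ge0 //; try exact: ltW.
    exact: hnu.1.
  rewrite -mulr_suml big_split /= -!mulr_sumr hmu_sum hnu.2.
  have hne : beta' != 0 by rewrite gt_eqF.
  by field.
apply: (etrans _ heq); apply: eq_bigr => w _; congr (_ * _).
have hne : beta' != 0 by rewrite gt_eqF.
by field.
Qed.

Lemma obj_le1 (beta : R) (pi : A -> Omega -> R) : lp_feasible uR mu0 a0 beta pi -> lp_obj mu0 a0 pi <= 1.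
Proof.
move=> [h0 h1 _ _].
have hge : forall b, 0 <= \sum_w pi b w * mu0 w.
  by move=> b; apply: sumr_ge0 => w _; apply: mulr_ge0 => //; apply: ltW.
have -> : 1 = \sum_b \sum_w pi b w * mu0 w.
  rewrite exchange_big /= -hmu_sum; apply: eq_bigr => w _.
  by rewrite -mulr_suml h1 mul1r.
rewrite /lp_obj [X in _ <= X](bigID (fun b => b != a0)) /= lerDl.
by apply: sumr_ge0 => b _.
Qed.

Lemma part3 (beta : R) (pi : A -> Omega -> R) : 0 < beta <= 1 -> (0 < margin uR mu0 a0)%E ->
  lp_feasible uR mu0 a0 beta pi -> 0 < lp_obj mu0 a0 pi ->
  (margin uR mu0 a0 * ((Num.sqrt 2)^-1)%:E <= (lp_value uR mu0 a0 beta)%:E)%E.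
Proof.
move=> /andP[hb0 hb1] hmarg hfeas hobj.
have [h0 h1 h2 h3] := hfeas.
have [a [ha hma]] : exists a, a != a0 /\ 0 < \sum_w pi a w * mu0 w.
  apply: contrapT => H; move: hobj; rewrite /lp_obj ltNge => /negP; apply.
  apply: sumr_le0 => b hb; rewrite leNgt; apply/negP => hlt; apply: H.
  by exists b.
set ma := \sum_w pi a w * mu0 w in hma.
pose nu := fun w => pi a w * mu0 w / ma.
have hnu : simplex nu.
  split; first by move=> w; apply: divr_ge0; [apply: mulr_ge0 => //; apply: ltW|apply: ltW].
  by rewrite /nu -mulr_suml divrr // unitfE gt_eqF.
have hmane : ma != 0 by rewrite gt_eqF.
set K := \sum_w' mu0 w' * Du uR a a0 w'.
have E1 : forall b', lp_expr uR mu0 beta pi a b' =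
   beta * \sum_w pi a w * mu0 w * Du uR a b' w +
   (1 - beta) * (\sum_w' mu0 w' * Du uR a b' w') * ma.
  move=> b'; rewrite /lp_expr.
  under eq_bigr do rewrite mulrDr.
  rewrite big_split /=; congr (_ + _).
    by rewrite mulr_sumr; apply: eq_bigr => w _; ring.
  by rewrite -mulr_suml -/ma mulrC.
have heq : \sum_w Du uR a a0 w * ((1 - beta) * mu0 w + beta * nu w) = 0.
  have : ma * \sum_w Du uR a a0 w * ((1 - beta) * mu0 w + beta * nu w) =
         lp_expr uR mu0 beta pi a a0.
    rewrite E1.
    transitivity (\sum_w (beta * (pi a w * mu0 w * Du uR a a0 w) +
                         (1 - beta) * ma * (mu0 w * Du uR a a0 w))).
      by rewrite mulr_sumr; apply: eq_bigr => w _; rewrite /nu; field.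
    rewrite big_split /= -!mulr_sumr -/K; congr (_ + _); exact: mulrAC.
  rewrite h3 // => /eqP; rewrite mulf_eq0 (negbTE hmane) /= => /eqP //.
have [hbpos hmle] := S_margin beta a nu (ltW hb0) ha hnu heq.
have hnlt := simplex_enorm_lt _ _ _ _ hnu (conj (fun w => ltW (hmu_pos w)) hmu_sum) hmu_pos.
have hs2 : 0 < Num.sqrt (2 : R) by rewrite sqrtr_gt0.
case hM : (margin uR mu0 a0) hmarg hmle => [delta| |] //.
rewrite lte_fin lee_fin => hd0 hdle.
have hn0 := enorm_ge0 _ _ (fun w => nu w - mu0 w).
have hdlt : delta < Num.sqrt 2.
  apply: (le_lt_trans hdle).
  have : beta * enorm (fun w => nu w - mu0 w) <= enorm (fun w => nu w - mu0 w).
    have h1b : 0 <= 1 - beta by rewrite subr_ge0.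
    by have := mulr_ge0 h1b hn0; rewrite mulrBl mul1r subr_ge0.
  lra.
pose m := delta / Num.sqrt 2.
have hm0 : 0 < m by rewrite divr_gt0.
have hm1 : m < 1 by rewrite ltr_pdivrMr // mul1r.
pose t := m / (1 - m).
have ht0 : 0 < t by rewrite divr_gt0 // subr_gt0.
pose d := fun w => mu0 w - nu w.
have hd : \sum_w d w = 0 by rewrite /d sumrB hnu.2 hmu_sum subrr.
pose r := fun w => mu0 w + t * d w.
have hr : Rone uR a0 r.
  apply/Rone_g; split.
    by rewrite /r big_split /= -mulr_sumr hd hmu_sum mulr0 addr0.
  move=> i; rewrite leNgt; apply/negP; rewrite /r g_lin => hlt.
  have hgm := g_mu0 i.
  have hgd : g i d < 0.
    rewrite ltNge; apply/negP => hge.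
    have : 0 <= t * g i d by apply: mulr_ge0 => //; apply: ltW.
    lra.
  have [s [hs0 hsle hRp hrel]] := exit d hd i hgd.
  have hst : s < t.
    apply: (le_lt_trans hsle); rewrite ltr_pdivrMr ?oppr_gt0 //; lra.
  have := margin_le _ hrel; rewrite hM lee_fin.
  rewrite (_ : (fun w => _) = fun w => (- s) * d w); last by rewrite funeqE => w; ring.
  rewrite enormZ normrN gtr0_norm // => hdsn.
  have hsimp := simplex_enorm _ _ _ _ hRp.1 hnu.
  rewrite (_ : (fun w => _) = fun w => (1 + s) * d w) in hsimp; last first.
    by rewrite funeqE => w; rewrite /d; ring.
  rewrite enormZ gtr0_norm in hsimp; last by lra.
  have hdn := enorm_ge0 _ _ d.
  have hdel : delta = m * Num.sqrt 2 by rewrite /m divfK // gt_eqF.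
  have hA : m * (1 + s) <= s.
    rewrite -(ler_pM2r hs2).
    have : delta * (1 + s) <= s * enorm d * (1 + s) by rewrite ler_pM2r //; lra.
    have : s * ((1 + s) * enorm d) <= s * Num.sqrt 2 by rewrite ler_pM2l.
    rewrite hdel; nra.
  have hB : s * (1 - m) < m.
    by rewrite -ltr_pdivlMr // subr_gt0.
  nra.
pose pi' := fun b w => if b == a then m * nu w / mu0 w
                       else if b == a0 then (1 - m) * r w / mu0 w else 0.
have hr0 : forall w, 0 <= r w by move=> w; exact: hr.1.1.
have hmune : forall w, mu0 w != 0 by move=> w; rewrite gt_eqF.
have ha0a : (a0 == a) = false by apply/negbTE; rewrite eq_sym.
have hpa : forall w, pi' a w * mu0 w = m * nu w.
  by move=> w; rewrite /pi' eqxx divfK.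
have hpa0 : forall w, pi' a0 w * mu0 w = (1 - m) * r w.
  by move=> w; rewrite /pi' ha0a eqxx divfK.
have hsum1 : forall w, m * nu w + (1 - m) * r w = mu0 w.
  move=> w; rewrite /r /d /t; field; rewrite subr_eq0; apply/eqP => h1m.
  by move: hm1; rewrite -h1m ltxx.
have hfeas' : lp_feasible uR mu0 a0 beta pi'.
  split.
  - move=> b w; rewrite /pi'; case: ifP => _.
      apply: divr_ge0; [apply: mulr_ge0; [exact: ltW|exact: hnu.1]|exact: ltW].
    case: ifP => _ //; apply: divr_ge0; [apply: mulr_ge0 => //; rewrite subr_ge0; exact: ltW|exact: ltW].
  - move=> w; rewrite (bigD1 a) // (bigD1 a0) /=; last by rewrite eq_sym.
    rewrite big1; last by move=> b /andP[hba hba0]; rewrite /pi' (negbTE hba) (negbTE hba0).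
    apply: (mulIf (hmune w)); rewrite addr0 mulrDl hpa hpa0 hsum1 mul1r //.
  - move=> b b' hbb'.
    case: (eqVneq b a) hbb' => [->|hba] hbb'.
      have -> : lp_expr uR mu0 beta pi' a b' = m / ma * lp_expr uR mu0 beta pi a b'.
        rewrite /lp_expr mulr_sumr; apply: eq_bigr => w _; rewrite hpa /nu.
        by field; exact: hmane.
      apply: mulr_ge0; first by apply: divr_ge0; apply: ltW.
      by apply: h2.
    case: (eqVneq b a0) => [hb0e|hba0]; last first.
      by rewrite /lp_expr big1 // => w _; rewrite /pi' (negbTE hba) (negbTE hba0) !mul0r.
    rewrite hb0e in hbb' *.
    have -> : lp_expr uR mu0 beta pi' a0 b' =
       (1 - m) * (beta * g (inr b') r + (1 - beta) * g (inr b') mu0).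
      rewrite /= (negbTE hbb') /lp_expr.
      have hC : \sum_w' mu0 w' * Du uR a0 b' w' = \sum_w Du uR a0 b' w * mu0 w.
        by apply: eq_bigr => w _; rewrite mulrC.
      rewrite hC.
      set C := \sum_w Du uR a0 b' w * mu0 w.
      have hsr : \sum_w r w = 1 by exact: hr.1.2.
      transitivity (\sum_w ((1 - m) * beta * (Du uR a0 b' w * r w) +
                             (1 - m) * (1 - beta) * C * r w)).
        by apply: eq_bigr => w _; rewrite hpa0; ring.
      by rewrite big_split /= -!mulr_sumr hsr; ring.
    apply: mulr_ge0; first by rewrite subr_ge0 ltW.
    apply: addr_ge0; apply: mulr_ge0; rewrite ?subr_ge0 //; try exact: ltW.
    - by have := (proj1 (Rone_g r) hr).2 (inr b').
    - exact: ltW (g_mu0 (inr b')).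
  - move=> b hb.
    case: (eqVneq b a) => [->|hba].
      have h0' : m / ma * lp_expr uR mu0 beta pi a a0 = 0 by rewrite h3 // mulr0.
      apply: (etrans _ h0').
      rewrite /lp_expr mulr_sumr; apply: eq_bigr => w _; rewrite hpa /nu.
      by field; exact: hmane.
    by rewrite /lp_expr big1 // => w _; rewrite /pi' (negbTE hba) (negbTE hb) !mul0r.
have hobj' : lp_obj mu0 a0 pi' = m.
  rewrite /lp_obj (bigD1 a) //= [X in _ + X]big1 ?addr0; last first.
    by move=> b /andP[hb0' hba]; apply: big1 => w _; rewrite /pi' (negbTE hba) (negbTE hb0') mul0r.
  under eq_bigr do rewrite hpa.
  by rewrite -mulr_sumr hnu.2 mulr1.
have hub : has_ubound [set lp_obj mu0 a0 pi | pi in lp_feasible uR mu0 a0 beta].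
  by exists 1 => x [p hp <-]; apply: obj_le1 hp.
have hle : m <= lp_value uR mu0 a0 beta.
  rewrite /lp_value; apply: ub_le_sup => //; exists pi' => //.
rewrite -EFinM lee_fin; exact: hle.
Qed.

Lemma part2 (b : R) : Sset uR mu0 a0 b ->
  (margin uR mu0 a0 <= (b * Num.sqrt 2)%:E)%E.
Proof.
move=> [/andP[hb0 hb1] [a [ha [nu [hnu heq]]]]].
have [_ hle] := S_margin b a nu hb0 ha hnu heq.
apply: (le_trans hle); rewrite lee_fin; apply: ler_wpM2l => //.
apply: simplex_enorm => //; split => //; move=> w; exact: ltW.
Qed.

Lemma main_all (hmargin : (0 < margin uR mu0 a0)%E) :
  let delta := margin uR mu0 a0 in
  let S := Sset uR mu0 a0 in
  (forall beta beta', S beta -> beta <= beta' <= 1 -> S beta') /\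
  (forall beta, S beta -> (delta * ((Num.sqrt 2)^-1)%:E <= beta%:E)%E) /\
  (S !=set0 -> (delta * ((Num.sqrt 2)^-1)%:E <= (inf S)%:E)%E) /\
  (forall beta, 0 < beta <= 1 ->
     (exists pi, lp_feasible uR mu0 a0 beta pi /\ 0 < lp_obj mu0 a0 pi) ->
     (delta * ((Num.sqrt 2)^-1)%:E <= (lp_value uR mu0 a0 beta)%:E)%E).
Proof using hmu_pos hmu_sum hdefault.
move=> delta S.
have hs2 : 0 < Num.sqrt (2 : R) by rewrite sqrtr_gt0.
split; [|split; [|split]].
- by move=> b b' hS hb; apply: S_upper hS hb.
- by move=> b hb; rewrite /delta lee_pdivrMr //; apply: part2.
- move=> [b0 hb0]; rewrite /delta.
  case hM : (margin uR mu0 a0) hmargin => [x| |] //; last first.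
    by have := part2 b0 hb0; rewrite hM.
  move=> _; rewrite lee_pdivrMr // lee_fin -ler_pdivrMr //.
  apply: lb_le_inf; first by exists b0.
  move=> b hb; have := part2 b hb; rewrite hM lee_fin ler_pdivrMr //.
- move=> beta hb [pi [hf ho]]; exact: part3 hb hmargin hf ho.
Qed.

End Main.

Theorem propositionC1 (R : realType) (Omega A : finType)
  (mu0 : Omega -> R) (uR : A -> Omega -> R) (a0 : A)
  (hmu_pos : forall w, 0 < mu0 w) (hmu_sum : \sum_w mu0 w = 1)
  (hdefault : forall a, a != a0 ->
     \sum_w mu0 w * uR a w < \sum_w mu0 w * uR a0 w)
  (hmargin : (0 < margin uR mu0 a0)%E) :
  let delta := margin uR mu0 a0 in
  let S := Sset uR mu0 a0 in
  (* 1. S is an upper interval of [0,1] *)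
  (forall beta beta', S beta -> beta <= beta' <= 1 -> S beta') /\
  (* 2. lower bound delta / sqrt 2 on S and on its infimum *)
  (forall beta, S beta -> (delta * ((Num.sqrt 2)^-1)%:E <= beta%:E)%E) /\
  (S !=set0 -> (delta * ((Num.sqrt 2)^-1)%:E <= (inf S)%:E)%E) /\
  (* 3. LP optimal value bound *)
  (forall beta, 0 < beta <= 1 ->
     (exists pi, lp_feasible uR mu0 a0 beta pi /\ 0 < lp_obj mu0 a0 pi) ->
     (delta * ((Num.sqrt 2)^-1)%:E <= (lp_value uR mu0 a0 beta)%:E)%E).
Proof.
exact: (@main_all R Omega A mu0 uR a0 hmu_pos hmu_sum hdefault hmargin).
Qed.
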